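(* Let $\tilde L$ be a minimum-size counterexample. For every meet-irreducible element $m$ of $\tilde L$ there exists a join-irreducible element $j$ of $\tilde L$ such that $j\le m$ and $|{\uparrow}j|=\frac{|\tilde L|+1}{2}$.
   Context: For a poset $P$, $x$ upper covers $y$ (and $y$ lower covers $x$) if $y<x$ with nothing strictly between. Join-irreducible: upper covers exactly one element; meet-irreducible: lower covers exactly one element. For $x\in P$, ${\uparrow}x=\{y\in P: x\le y\}$. A counterexample is a finite lattice $L$ with $|L|>1$ in which every join-irreducible $j$ satisfies $|{\uparrow}j|>|L|/2$; a minimum-size counterexample is a counterexample $\tilde L$ such that no counterexample has fewer elements. *)

(* Defs.v *)
From mathcomp Require Import all_boot all_order.
Set Implicit Arguments. Unset Strict Implicit. Unset Printing Implicit Defensive.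
Import Order.TTheory.
Local Open Scope order_scope.

Section LatticeDefs.
Context {disp : Order.disp_t} {L : finLatticeType disp}.

Definition covers (x y : L) : bool :=
  (y < x) && [forall z : L, ~~ ((y < z) && (z < x))].

Definition join_irr (j : L) : bool := #|[set y : L | covers j y]| == 1%N.

Definition meet_irr (m : L) : bool := #|[set x : L | covers x m]| == 1%N.

Definition upset (x : L) : {set L} := [set y : L | x <= y].

End LatticeDefs.

(* A counterexample: finite lattice with more than one element in which
   every join-irreducible j satisfies |up j| > |L|/2, i.e. 2|up j| > |L|. *)
Definition counterexample {disp : Order.disp_t} (L : finLatticeType disp) : Prop :=
  (1 < #|L|)%N /\
  forall j : L, join_irr j -> (#|L| < 2 * #|upset j|)%N.

Definition min_counterexample {disp : Order.disp_t} (L : finLatticeType disp) : Prop :=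
  counterexample L /\
  forall (disp' : Order.disp_t) (L' : finLatticeType disp'),
    counterexample L' -> (#|L| <= #|L'|)%N.

(* Main.v *)
Require Import Defs.
From HB Require Import structures.
From mathcomp Require Import all_boot all_order zify.
Import Order.TTheory.
Local Open Scope order_scope.
Set Implicit Arguments. Unset Strict Implicit.
Set Warnings "-notation-overridden".
Lemma cover_below d (L : finLatticeType d) (x y : L) : y < x ->
  (exists2 c, y <= c & covers x c) /\ (exists2 c, covers c y & c <= x).
Proof.
move=> yx; move Hn0: #|[set w : L | (y < w) && (w < x)]| => n0.
have : (n0 <= n0)%N by [].
rewrite -{1}Hn0 => Hn; clear Hn0.
elim: n0 x y yx Hn => [|n IH] x y yx Hn;
 (have [cxy|ncxy] := boolP (covers x y); first by split; [exists y | exists x]);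
 have [z /andP[yz zx]] : exists z, (y < z) && (z < x)
  by move: ncxy; rewrite /covers yx /= => /forallPn [z]; rewrite negbK; exists z.
  have zin : z \in [set w : L | (y < w) && (w < x)] by rewrite inE yz zx.
  have : (0 < #|[set w : L | (y < w)%O && (w < x)%O]|)%N by apply/card_gt0P; exists z.
  by rewrite ltnNge Hn.
have [H1 _] : (exists2 c, z <= c & covers x c) /\ (exists2 c, covers c z & c <= x).
  apply: IH => //; rewrite -ltnS; apply: leq_trans Hn; apply: proper_card.
  apply/properP; split.
    by apply/subsetP => w; rewrite !inE => /andP[zw ->]; rewrite (lt_trans yz zw).
  by exists z; rewrite !inE ?yz ?zx ?ltxx.
have [_ H2] : (exists2 c, y <= c & covers z c) /\ (exists2 c, covers c y & c <= z).
  apply: IH => //; rewrite -ltnS; apply: leq_trans Hn; apply: proper_card.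
  apply/properP; split.
    by apply/subsetP => w; rewrite !inE => /andP[-> wz]; rewrite (lt_trans wz zx).
  by exists z; rewrite !inE ?yz ?zx ?ltxx.
split.
  by case: H1 => c zc cc; exists c => //; exact: le_trans (ltW yz) zc.
by case: H2 => c cc cz; exists c => //; exact: le_trans cz (ltW zx).
Qed.
Section Sub.
Variables (d : Order.disp_t) (L : finLatticeType d) (m : L).
Hypothesis Hm : meet_irr m.

Definition ms : L := odflt m [pick x | covers x m].

Lemma covers_ms : covers ms m.
Proof.
rewrite /ms; case: pickP => [x //|H].
move: Hm; rewrite /meet_irr => /cards1P [a Ha].
have : a \in [set x | covers x m] by rewrite Ha inE.
by rewrite inE H.
Qed.

Lemma covers_m_eq c : covers c m -> c = ms.
Proof.
move: Hm; rewrite /meet_irr => /cards1P [a Ha] cc.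
have h1 : c \in [set x | covers x m] by rewrite inE.
have h2 : ms \in [set x | covers x m] by rewrite inE covers_ms.
by move: h1 h2; rewrite Ha !inE => /eqP -> /eqP ->.
Qed.

Lemma m_lt_ms : m < ms.
Proof. by case/andP: covers_ms. Qed.

Lemma above_m x : m < x -> ms <= x.
Proof. by move=> /cover_below [_ [c /covers_m_eq -> ]]. Qed.

Record ST (h : meet_irr m) := MkST { stval :> L; _ : stval != m }.
Arguments MkST {h}.
Arguments stval {h}.
Local Notation STH := (ST Hm).
HB.instance Definition _ := [isSub of STH for @stval Hm].
HB.instance Definition _ := [Finite of STH by <:].
HB.instance Definition _ := [SubChoice_isSubPOrder of STH by <: with d].

Lemma leST (x y : STH) : (x <= y) = (stval x <= stval y).
Proof. by []. Qed.

Lemma meet_neq (x y : STH) : stval x `&` stval y != m.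
Proof.
apply/negP => /eqP e.
have hx : m < stval x by rewrite lt_neqAle eq_sym (valP x) -e leIl.
have hy : m < stval y by rewrite lt_neqAle eq_sym (valP y) -e leIr.
have : ms <= m by rewrite -e lexI !above_m.
by rewrite lt_geF // m_lt_ms.
Qed.

Lemma ms_neq : ms != m.
Proof. by rewrite gt_eqF // m_lt_ms. Qed.

Definition jn (x y : STH) : L := if stval x `|` stval y == m then ms else stval x `|` stval y.
Lemma jn_neq (x y : STH) : jn x y != m.
Proof. rewrite /jn; case: ifP => [_|/negbT //]; exact: ms_neq. Qed.

Definition meetST (x y : STH) : STH := MkST _ (meet_neq x y).
Definition joinST (x y : STH) : STH := MkST _ (jn_neq x y).

Lemma meetSTP (x y z : STH) : (x <= meetST y z) = (x <= y) && (x <= z).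
Proof. by rewrite !leST /= lexI. Qed.

Lemma joinSTP (x y z : STH) : (joinST x y <= z) = (x <= z) && (y <= z).
Proof.
rewrite !leST /= /jn -leUx; case: ifP => // /eqP ->.
apply/idP/idP => h; first exact: le_trans (ltW m_lt_ms) h.
by apply: above_m; rewrite lt_neqAle h andbT eq_sym (valP z).
Qed.

HB.instance Definition _ := Order.POrder_MeetJoin_isLattice.Build d STH meetSTP joinSTP.

Lemma cardST : #|{: STH}| = #|L|.-1.
Proof. by rewrite card_sub cardC1. Qed.


Lemma ltST (x y : STH) : (x < y) = (stval x < stval y).
Proof. by rewrite !lt_def leST. Qed.

Lemma coversL (x y : STH) : covers (stval x) (stval y) -> covers x y.
Proof.
case/andP => h /forallP H; apply/andP; split; first by rewrite ltST.
by apply/forallP => z; rewrite !ltST; exact: H.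
Qed.

Lemma coversT (x y : STH) :
  covers x y -> covers (stval x) (stval y) \/ ((stval y < m) && (m < stval x)).
Proof.
case/andP; rewrite ltST => h /forallP H.
case: (boolP [forall z, ~~((stval y < z) && (z < stval x))]) => [H2|].
  by left; rewrite /covers h H2.
move/forallPn => [z]; rewrite negbK => hz.
case: (eqVneq z m) => [e|zm]; first by right; rewrite -e.
by move: (H (MkST _ zm)); rewrite !ltST /= hz.
Qed.

Lemma covers_irr_T (x : STH) : stval x != ms -> join_irr x = join_irr (stval x).
Proof.
move=> xms; rewrite /join_irr.
suff -> : [set y : L | covers (stval x) y] = val @: [set y : STH | covers x y].
  by rewrite card_imset //; exact: val_inj.
apply/setP => y; rewrite inE; apply/idP/imsetP.
  move=> cy; have ym : y != m.
    apply/eqP => e; rewrite e in cy.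
    by move: xms; rewrite (covers_m_eq cy) eqxx.
  by exists (MkST _ ym) => //; rewrite inE; exact: coversL.
case=> z; rewrite inE => cz ->; case: (coversT cz) => [//|/andP[zm mx]].
have h1 := above_m mx.
have h2 : ms < stval x by rewrite lt_neqAle eq_sym xms h1.
case/andP: cz => _ /forallP /(_ (MkST _ ms_neq)).
by rewrite !ltST /= h2 andbT (lt_trans zm m_lt_ms).
Qed.

Lemma up_bound (j : STH) : (#|upset (stval j)| <= #|upset j| + (stval j <= m)%O)%N.
Proof.
apply: (@leq_trans #|val @: upset j :|: (if stval j <= m then [set m] else set0)|).
  apply: subset_leq_card; apply/subsetP => x; rewrite inE => jx.
  rewrite inE; case: (eqVneq x m) => [e|xm].
    by rewrite e in jx *; rewrite jx inE eqxx orbT.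
  by apply/orP; left; apply/imsetP; exists (MkST _ xm) => //; rewrite inE leST.
apply: leq_trans (leq_card_setU _ _) _.
apply: leq_add; first exact: leq_imset_card.
by case: (stval j <= m); rewrite ?cards1 ?cards0.
Qed.

Lemma up_m_bound (j : STH) : stval j = ms -> (#|upset m| <= 1 + #|upset j|)%N.
Proof.
move=> ejms.
apply: (@leq_trans #|m |: val @: upset j|).
  apply: subset_leq_card; apply/subsetP => x; rewrite inE => mx.
  rewrite !inE; case: (eqVneq x m) => [//|xm] /=.
  apply/imsetP; exists (MkST _ xm) => //; rewrite inE leST /= ejms.
  by apply: above_m; rewrite lt_neqAle eq_sym xm mx.
rewrite cardsU1; apply: leq_add; first exact: leq_b1.
exact: leq_imset_card.
Qed.

Lemma key (j : STH) : join_irr j -> stval j = ms -> ~~ join_irr (stval j) -> join_irr m.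
Proof.
move=> hj ejms hjL.
move: hj; rewrite /join_irr => /cards1P [c Hc].
have cov_c z : covers j z -> z = c.
  move=> cz; have: z \in [set y | covers j y] by rewrite inE.
  by rewrite Hc inE => /eqP.
have [c' cc' c'm] : exists2 c', covers ms c' & c' != m.
  case: (boolP [exists y, covers ms y && (y != m)]) => [/existsP [y /andP[h1 h2]]|/existsPn H].
    by exists y.
  exfalso; move: hjL; rewrite ejms /join_irr; apply/negPn.
  suff -> : [set y | covers ms y] = [set m] by rewrite cards1.
  apply/setP => y; rewrite !inE; apply/idP/eqP => [cy|->]; last exact: covers_ms.
  by move: (H y); rewrite cy /= negbK => /eqP.
have e2 : MkST _ c'm = c by apply: cov_c; apply: coversL; rewrite /= ejms.
have below y : y < m -> y <= c'.
  move=> ym; have yn : y != m by rewrite lt_eqF.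
  have : MkST _ yn < j by rewrite ltST /= ejms (lt_trans ym m_lt_ms).
  case/cover_below => [[cc ycc /cov_c e] _].
  by move: ycc; rewrite e -e2 leST.
have mc' : ~~ (m <= c').
  apply/negP=> h; have mlc : m < c' by rewrite lt_neqAle eq_sym c'm h.
  case/andP: cc' => c'ms _.
  by move: covers_ms => /andP[_ /forallP /(_ c')]; rewrite mlc c'ms.
pose dd := m `&` c'.
have ddm : dd < m.
  rewrite lt_neqAle leIl andbT; apply: contra mc' => /eqP e.
  by rewrite -e leIr.
rewrite /join_irr.
suff -> : [set y | covers m y] = [set dd] by rewrite cards1.
apply/setP => y; rewrite !inE; apply/idP/eqP => [cy|->].
  case/andP: cy => ym /forallP H.
  have yd : y <= dd by rewrite lexI (ltW ym) below.
  apply/eqP; apply/negPn/negP => ne; move: (H dd).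
  by rewrite ddm andbT lt_neqAle ne yd.
apply/andP; split => //; apply/forallP => z; apply/negP => /andP[dz zm].
have : z <= dd by rewrite lexI (ltW zm) below.
by rewrite lt_geF.
Qed.

Lemma main_sec : counterexample L -> ~ counterexample STH ->
  exists j : L, [/\ join_irr j, j <= m & (2 * #|upset j| = #|L| + 1)%N].
Proof.
move=> [HL1 HLj] notCE.
have [small|big] := leqP #|{: STH}| 1.
  exfalso; move/fintype_le1P: small => small.
  have all_ms y : y != m -> y = ms.
    by move=> yn; move: (small (MkST _ ms_neq) (MkST _ yn)) => /(congr1 (@stval Hm)).
  have hji : join_irr ms.
    rewrite /join_irr; suff -> : [set y | covers ms y] = [set m] by rewrite cards1.
    apply/setP => y; rewrite !inE; apply/idP/eqP => [cy|->]; last exact: covers_ms.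
    case: (eqVneq y m) => // /all_ms e; case/andP: cy => h _.
    by move: h; rewrite e ltxx.
  have hup : upset ms = [set ms].
    apply/setP => y; rewrite !inE; apply/idP/eqP => [h|->]; last exact: lexx.
    apply: all_ms; apply/eqP => e; rewrite e in h.
    by move: h; rewrite lt_geF // m_lt_ms.
  by move: (HLj _ hji); rewrite hup cards1; lia.
have : [exists j : STH, join_irr j && (2 * #|upset j| <= #|{: STH}|)%N].
  apply: contraT => /existsPn H; exfalso; apply: notCE; split => // j hj.
  by move: (H j); rewrite hj /= -ltnNge.
case/existsP => j /andP[hj hup].
have hb := up_bound j.
rewrite cardST in hup.
case: (boolP (join_irr (stval j))) => hjL.
  exists (stval j); have := HLj _ hjL.
  case: (boolP (stval j <= m)) => hjm in hb *; rewrite /= in hb => h.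
  split => //.
  move: hup hb h; move: #|upset j| => a; move: #|upset (stval j)| => b.
  move: HL1; move: #|L| => n. lia.
  exfalso; move: hup hb h; move: #|upset j| => a; move: #|upset (stval j)| => b.
  move: HL1; move: #|L| => n. lia.
have ejms : stval j = ms.
  apply: (contraTeq _ hjL) => ne; by rewrite negbK -covers_irr_T.
have hjm := key hj ejms hjL.
exists m; move: (HLj _ hjm) (up_m_bound ejms) => h1 h2; split => //.
move: hup h1 h2; move: #|upset j| => a; move: #|upset m| => b.
move: HL1; move: #|L| => n. lia.
Qed.

End Sub.

Unset Implicit Arguments.

Theorem theorem2p12 (disp : Order.disp_t) (L : finLatticeType disp) :
  min_counterexample L ->
  forall m : L, meet_irr m ->
  exists j : L, [/\ join_irr j, j <= m & (2 * #|upset j| = #|L| + 1)%N].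
Proof.
move=> [HL Hmin] m Hm; apply: (@main_sec _ L m Hm HL) => /Hmin.
rewrite cardST; move: HL => [+ _]; case: #|L| => //= n _; lia.
Qed.
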